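(* Let $\mu$ be a positive Borel measure on $\mathbb{C}$ with finite moments $m_{j,k}=\int_{\mathbb{C}}z^j\overline z^kd\mu(z)$, and assume the moment matrix is tri-diagonal, i.e. $m_{j,k}=0$ whenever $|j-k|\ge2$. Let $\widehat m_{j,k}=\operatorname{Re}m_{j,k}$, $g_{j,k}=2(\widehat m_{j+1,k}-\widehat m_{j,k+1})$, $G_k=(g_{i,j})_{i,j=0}^{2k-1}$, $\Delta_{-1}=1$, $\Delta_k=\mathrm{Pf}(G_{k+1})$ for $k\ge0$ (assumed nonzero), and $\mathcal Z_j=\frac12\frac{\Delta_{j-1}}{\Delta_{j-2}}$ for $j\ge1$. Then monic skew-orthogonal polynomials with respect to the skew-product $\langle f,g\rangle_s=\int_{\mathbb{C}}(f(z)\overline{g(z)}-g(z)\overline{f(z)})(z-\overline z)d\mu(z)$ are given by $q_{2k}(z)=\sum_{j=0}^{2k}\alpha_{2k,j}z^j$, $q_{2k+1}(z)=\sum_{j=0}^{2k+1}\beta_{2k+1,j}z^j$ with $\alpha_{2k,2k}=1$, $\beta_{2k+1,2k+1}=1$, $\beta_{2k+1,2k}=\beta_{2k+1,2k-1}=0$, and the remaining coefficients determined by, for $j=1,2,\dots,k$ (with the convention $\alpha_{2k,2k+1}=0$): $$\mathcal Z_j\alpha_{2k,2j-1}=-\widehat m_{2j-1,2j}\alpha_{2k,2j},\qquad\mathcal Z_j\alpha_{2k,2j-2}=\widehat m_{2j,2j+1}\alpha_{2k,2j+1}+\widehat m_{2j,2j}\alpha_{2k,2j},$$ $$\mathcal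 Z_j\beta_{2k+1,2j-1}=-\widehat m_{2j-1,2j}\beta_{2k+1,2j},\qquad\mathcal Z_j\beta_{2k+1,2j-2}=\widehat m_{2j,2j+1}\beta_{2k+1,2j+1}+\widehat m_{2j,2j}\beta_{2k+1,2j}.$$
   Context: Polynomials $(q_k)_{k\ge0}$ with $\deg q_k=k$ are skew-orthogonal if $\langle q_{2k},q_{2\ell}\rangle_s=\langle q_{2k+1},q_{2\ell+1}\rangle_s=0$ and $\langle q_{2k},q_{2\ell+1}\rangle_s=-\langle q_{2\ell+1},q_{2k}\rangle_s=r_k\delta_{k,\ell}$; monic means leading coefficient $1$. $\mathrm{Pf}$ denotes the Pfaffian of an antisymmetric matrix. *)

(* Defs.v *)
From HB Require Import structures.
From mathcomp Require Import all_boot all_order all_algebra all_fingroup.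
From mathcomp Require Import all_classical all_reals all_analysis.
From mathcomp Require Import complex.

Set Implicit Arguments.
Unset Strict Implicit.
Unset Printing Implicit Defensive.

Import Order.TTheory GRing.Theory Num.Theory.
Local Open Scope ring_scope.

Lemma pf_ev_proof n (i : 'I_n) : (i.*2 < n.*2)%N.
Proof. by rewrite ltn_double ltn_ord. Qed.

Lemma pf_od_proof n (i : 'I_n) : (i.*2.+1 < n.*2)%N.
Proof. by rewrite -[(i.*2.+1 < _)%N]/(i.+1.*2 <= n.*2)%N leq_double ltn_ord. Qed.

Definition pf_ev n (i : 'I_n) : 'I_(n.*2) := Ordinal (pf_ev_proof i).
Definition pf_od n (i : 'I_n) : 'I_(n.*2) := Ordinal (pf_od_proof i).

Definition pfaffian (F : fieldType) (n : nat) (A : 'M[F]_(n.*2)) : F :=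
  ((2 ^ n * n`!)%:R)^-1 *
  \sum_(s : 'S_(n.*2)) (-1) ^+ s * \prod_(i < n) A (s (pf_ev i)) (s (pf_od i)).

Section Moments.
Variable R : realType.
Variable mu : {measure set (R * R)%type -> \bar R}.

(* the point z = x + i y of C identified with (x, y) in R x R *)
Definition zc (p : R * R) : R[i] := Complex p.1 p.2.

Definition cintegral (F : R * R -> R[i]) : R[i] :=
  Complex (fine (\int[mu]_p (complex.Re (F p))%:E))
          (fine (\int[mu]_p (complex.Im (F p))%:E)).

Definition moment (j k : nat) : R[i] :=
  cintegral (fun p => zc p ^+ j * (zc p)^* ^+ k).

Definition mhat (j k : nat) : R := complex.Re (moment j k).

Definition gcoef (j k : nat) : R := 2 * (mhat j.+1 k - mhat j k.+1).

Definition Gmat (n : nat) : 'M[R]_(n.*2) := \matrix_(i, j) gcoef i j.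

(* DeltaS n = Pf(G_n) = Delta_{n-1}; so Delta_k = DeltaS k.+1, Delta_{-1} = DeltaS 0 = 1 *)
Definition DeltaS (n : nat) : R := pfaffian (Gmat n).

(* Z_j = 1/2 * Delta_{j-1} / Delta_{j-2}  (j >= 1) *)
Definition Zc (j : nat) : R := 2^-1 * (DeltaS j / DeltaS j.-1).

Definition skew_prod (f g : {poly R[i]}) : R[i] :=
  cintegral (fun p => let z := zc p in
    (f.[z] * (g.[z])^* - g.[z] * (f.[z])^*) * (z - z^*)).

End Moments.

Definition rC (R : rcfType) (x : R) : R[i] := Complex x 0.

(* Main.v *)
Require Import Defs.
From HB Require Import structures.
From mathcomp Require Import all_boot all_order all_algebra all_fingroup.
From mathcomp Require Import all_classical all_reals all_analysis.
From mathcomp Require Import complex.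
From mathcomp Require Import zify ring lra.
Import Order.TTheory GRing.Theory Num.Theory.
Local Open Scope ring_scope.

Module PfPart.
Local Set Implicit Arguments. Local Unset Strict Implicit. Local Unset Printing Implicit Defensive.

Lemma tpermE' (T : finType) (x y z : T) :
  tperm x y z = if z == x then y else if z == y then x else z.
Proof.
case: tpermP => [->|->|/eqP/negbTE-> /eqP/negbTE->] //; rewrite ?eqxx //.
by case: eqP.
Qed.

Section Pf.
Variable F : fieldType.

Lemma sum_lift n (i j : 'I_n.+1) (H : 'S_n.+1 -> F) :
  \sum_(s : 'S_n.+1 | s i == j) H s = \sum_(s : 'S_n) H (lift_perm i j s).
Proof.
rewrite (reindex (lift_perm i j)); last first.
  pose ulsf i (s : 'S_n.+1) k := odflt k (unlift (s i) (s (lift i k))).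
  have ulsfK i' (s : 'S_n.+1) k: lift (s i') (ulsf i' s k) = s (lift i' k).
    rewrite /ulsf; have:= neq_lift i' k.
    by rewrite -(can_eq (permK s)) => /unlift_some[] ? ? ->.
  have inj_ulsf: injective (ulsf i _).
    move=> s; apply: can_inj (ulsf (s i) s^-1%g) _ => k'.
    by rewrite {1}/ulsf ulsfK !permK liftK.
  exists (fun s => perm (inj_ulsf s)) => [s _ | s].
    by apply/permP=> k'; rewrite permE /ulsf lift_perm_lift lift_perm_id liftK.
  move/(s _ =P _) => si0; apply/permP=> k.
  case: (unliftP i k) => [k'|] ->; rewrite ?lift_perm_id //.
  by rewrite lift_perm_lift -si0 permE ulsfK.
by apply: eq_bigl => s; rewrite lift_perm_id eqxx.
Qed.

Definition Tn n (A : nat -> nat -> F) : F :=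
  \sum_(s : 'S_(n.*2)) (-1) ^+ s * \prod_(i < n) A (s (pf_ev i)) (s (pf_od i)).

Definition Fs n (A : nat -> nat -> F) (s : 'S_(n.*2)) : F :=
  (-1) ^+ s * \prod_(i < n) A (s (pf_ev i)) (s (pf_od i)).

Lemma swap_pos N (G : 'S_N -> F) (sg : 'S_N) (HG : forall s, G (sg * s)%g = G s) x w :
  \sum_(s : 'S_N | s x == w) G s = \sum_(s : 'S_N | s (sg x) == w) G s.
Proof.
rewrite (reindex_inj (mulgI sg)); apply: eq_big => s; first by rewrite permM.
by rewrite HG.
Qed.

Lemma pf_ev_eq n (i j : 'I_n) : (pf_ev i == pf_ev j) = (i == j).
Proof. by apply/eqP/eqP => [/(congr1 val)/= /double_inj/val_inj|->]. Qed.
Lemma pf_od_eq n (i j : 'I_n) : (pf_od i == pf_od j) = (i == j).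
Proof. by apply/eqP/eqP => [/(congr1 val)/= [] /double_inj/val_inj|->]. Qed.
Lemma pf_evod n (i j : 'I_n) : (pf_ev i == pf_od j) = false.
Proof.
apply/negP => /eqP /(congr1 (fun k : 'I_ _ => odd (val k))) /=.
by rewrite !odd_double.
Qed.

Lemma pf_odev n (i j : 'I_n) : (pf_od i == pf_ev j) = false.
Proof. by rewrite eq_sym pf_evod. Qed.

Ltac pfne := rewrite ?pf_ev_eq ?pf_od_eq ?pf_evod ?pf_odev //; try (rewrite eq_sym ?pf_ev_eq ?pf_od_eq ?pf_evod ?pf_odev //).

Variable A : nat -> nat -> F.
Hypothesis skA : forall x y, A x y = - A y x.

Lemma Fs_inpair n (i : 'I_n) s : Fs A (tperm (pf_ev i) (pf_od i) * s)%g = Fs A s.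
Proof.
have HP : \prod_(j < n) A ((tperm (pf_ev i) (pf_od i) * s)%g (pf_ev j))
               ((tperm (pf_ev i) (pf_od i) * s)%g (pf_od j)) =
          - \prod_(j < n) A (s (pf_ev j)) (s (pf_od j)).
  rewrite (bigD1 i) //= [in RHS](bigD1 i) //= !permM tpermL tpermR skA mulNr.
  congr (- (_ * _)); apply: eq_bigr => j nji.
  by rewrite !permM !tpermD //; pfne.
have m1 : (-1) ^+ (~~ false) = -1 :> F by rewrite expr1.
rewrite /Fs HP odd_permM odd_tperm pf_evod signr_addb m1.
by rewrite mulrN mulN1r mulNr opprK.
Qed.

Lemma Fs_pairswap n (i k : 'I_n) s : i != k ->
  Fs A (tperm (pf_ev i) (pf_ev k) * tperm (pf_od i) (pf_od k) * s)%g = Fs A s.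
Proof.
move=> nik.
set sg := (tperm (pf_ev i) (pf_ev k) * tperm (pf_od i) (pf_od k))%g.
have HP : \prod_(j < n) A ((sg * s)%g (pf_ev j)) ((sg * s)%g (pf_od j)) =
          \prod_(j < n) A (s (pf_ev j)) (s (pf_od j)).
  rewrite [RHS](reindex_inj (@perm_inj _ (tperm i k))) /=.
  apply: eq_bigr => j _; rewrite !permM !tpermE'.
  have nki : k != i by rewrite eq_sym.
  have [->|nji] := eqVneq j i; [|have [->|njk] := eqVneq j k];
   repeat (first [rewrite eqxx | rewrite pf_ev_eq | rewrite pf_od_eq | rewrite pf_evod
        | rewrite pf_odev | rewrite (negbTE nik) | rewrite (negbTE nki) | rewrite (negbTE nji)
        | rewrite (negbTE njk)]) => //.
have sgn : odd_perm sg = false.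
  by rewrite /sg odd_permM !odd_tperm pf_ev_eq pf_od_eq nik.
by rewrite /Fs HP odd_permM sgn.
Qed.

Lemma Tn_lastpos m :
  Tn m.+1 A = (m.+1.*2)%:R *
    \sum_(s : 'S_(m.+1.*2) | s (pf_od (@ord_max m)) == pf_od (@ord_max m)) Fs A s.
Proof.
set w := pf_od (@ord_max m).
rewrite /Tn.
transitivity (\sum_(s : 'S_(m.+1.*2)) \sum_(p : 'I_(m.+1.*2) | s p == w) Fs A s).
  apply: eq_bigr => s _; rewrite (big_pred1 (s^-1 w)%g) // => p.
  by rewrite /= (can2_eq (permK s) (permKV s)).
rewrite (exchange_big_dep xpredT) //=.
have Hod : forall i : 'I_m.+1,
    \sum_(s : 'S_(m.+1.*2) | s (pf_od i) == w) Fs A s =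
    \sum_(s : 'S_(m.+1.*2) | s w == w) Fs A s.
  move=> i; have [->|nim] := eqVneq i ord_max; first by [].
  rewrite (@swap_pos _ _ (tperm (pf_ev i) (pf_ev ord_max) * tperm (pf_od i) (pf_od ord_max))%g).
    by rewrite permM (@tpermD _ (pf_ev i) (pf_ev ord_max) (pf_od i)) ?tpermL //; pfne.
  by move=> s; apply: Fs_pairswap.
rewrite (eq_bigr (fun _ => \sum_(s : 'S_(m.+1.*2) | s w == w) Fs A s)).
  by rewrite sumr_const card_ord mulr_natl.
move=> p _.
have hp : (p./2 < m.+1)%N by rewrite ltn_half_double.
pose i := Ordinal hp.
have [Hp|Hp] : p = pf_ev i \/ p = pf_od i.
- case Op: (odd p); [right|left]; apply: val_inj => /=;
  by rewrite -[in LHS](odd_double_half p) Op.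
- by rewrite Hp (@swap_pos _ _ _ (Fs_inpair i) (pf_ev i)) tpermL Hod.
- by rewrite Hp Hod.
Qed.

Lemma lift_max_val n (k : 'I_n) : val (lift ord_max k) = val k.
Proof. by rewrite /= /bump leqNgt ltn_ord. Qed.

Lemma Fs_lift2 m (v : 'I_(m.*2.+1)) (s2 : 'S_(m.*2)) :
  Fs (n := m.+1) A (lift_perm ord_max ord_max (lift_perm ord_max v s2)) =
  (-1) ^+ v * A v (m.*2.+1) * Fs (fun x y => A (bump v x) (bump v y)) s2.
Proof.
set s := lift_perm _ _ _.
have sgn : odd_perm s = odd v (+) odd_perm s2.
  rewrite /s !odd_lift_perm addbb /= odd_double /=.
  by [].
rewrite /Fs sgn signr_addb signr_odd big_ord_recr /=.
have e1 : s (pf_od (@ord_max m)) = ord_max.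
  have -> : pf_od (@ord_max m) = ord_max :> 'I_(m.*2.+2) by apply: val_inj.
  by rewrite lift_perm_id.
have e2 : s (pf_ev (@ord_max m)) = lift ord_max v.
  have -> : pf_ev (@ord_max m) = lift ord_max ord_max :> 'I_(m.*2.+2).
    by apply: val_inj; rewrite lift_max_val.
  by rewrite lift_perm_lift lift_perm_id.
have e3 : forall i : 'I_m, val (s (pf_ev (widen_ord (leqnSn m) i))) = bump v (s2 (pf_ev i)).
  move=> i.
  have -> : pf_ev (widen_ord (leqnSn m) i) = lift ord_max (lift ord_max (pf_ev i)) :> 'I_(m.*2.+2).
    by apply: val_inj; rewrite !lift_max_val.
  by rewrite !lift_perm_lift lift_max_val.
have e4 : forall i : 'I_m, val (s (pf_od (widen_ord (leqnSn m) i))) = bump v (s2 (pf_od i)).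
  move=> i.
  have -> : pf_od (widen_ord (leqnSn m) i) = lift ord_max (lift ord_max (pf_od i)) :> 'I_(m.*2.+2).
    by apply: val_inj; rewrite !lift_max_val.
  by rewrite !lift_perm_lift lift_max_val.
rewrite e1 e2 lift_max_val /=.
rewrite (eq_bigr (fun i => A (bump v (s2 (pf_ev i))) (bump v (s2 (pf_od i))))); last first.
  by move=> i _; rewrite e3 e4.
move: (\prod_(i < m) _) ((-1) ^+ v) ((-1) ^+ s2) (A v _) => P a b c.
by rewrite -!mulrA; congr (a * _); rewrite [RHS]mulrCA; congr (b * _); rewrite mulrC.
Qed.

Lemma Tn_rec m :
  Tn m.+1 A = (m.+1.*2)%:R * \sum_(v < m.*2.+1)
     (-1) ^+ v * A v (m.*2.+1) * Tn m (fun x y => A (bump v x) (bump v y)).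
Proof.
rewrite Tn_lastpos; congr (_ * _).
have -> : pf_od (@ord_max m) = ord_max :> 'I_(m.*2.+2) by apply: val_inj.
rewrite (sum_lift (n := m.*2.+1)).
rewrite (partition_big (fun s1 : 'S_(m.*2.+1) => s1 ord_max) xpredT) //=.
apply: eq_bigr => v _.
rewrite (eq_bigl (fun s1 : 'S_(m.*2.+1) => s1 ord_max == v)) //.
rewrite sum_lift /Tn big_distrr /=.
by apply: eq_bigr => s2 _; rewrite Fs_lift2.
Qed.

End Pf.

Section Penta.
Variable F : fieldType.

Lemma bump_lt h i : (i < h)%N -> bump h i = i.
Proof. by move=> H; rewrite /bump leqNgt H. Qed.
Lemma bump_ge h i : (h <= i)%N -> bump h i = i.+1.
Proof. by move=> H; rewrite /bump H. Qed.

Lemma Tn_ext n (A B : nat -> nat -> F) :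
  (forall x y, (x < n.*2)%N -> (y < n.*2)%N -> A x y = B x y) -> Tn n A = Tn n B.
Proof.
move=> H; apply: eq_bigr => s _; congr (_ * _); apply: eq_bigr => i _.
by apply: H; apply: ltn_ord.
Qed.

Lemma Tn0 (A : nat -> nat -> F) : Tn 0 A = 1.
Proof.
rewrite /Tn (big_pred1 1%g) => [|s]; first by rewrite odd_perm1 big_ord0 mulr1.
by rewrite /=; apply/esym/eqP/permP => -[].
Qed.

Variable A : nat -> nat -> F.
Hypothesis skA : forall x y, A x y = - A y x.
Hypothesis band : forall x y, (x + 3 <= y)%N -> A x y = 0.

Lemma Tn1 : Tn 1 A = 2 * A 0 1.
Proof.
by rewrite (Tn_rec skA) big_ord1 /= expr0 mul1r Tn0 mulr1.
Qed.

Lemma Tn_penta n :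
  Tn n.+2 A = (n.+2.*2)%:R * (A (n.*2.+2) (n.*2.+3) * Tn n.+1 A -
     A (n.*2.+1) (n.*2.+3) * ((n.+1.*2)%:R * (A (n.*2) (n.*2.+2) * Tn n A))).
Proof.
rewrite (Tn_rec skA); congr (_ * _).
rewrite -(big_mkord xpredT (fun v => (-1) ^+ v * A v (n.+1.*2.+1) *
   Tn n.+1 (fun x y => A (bump v x) (bump v y)))).
rewrite doubleS big_nat_recr //= big_nat_recr //= big_nat_cond big1 ?add0r; last first.
  move=> i /andP[/andP[_ hi] _]; rewrite band ?mulr0 ?mul0r //.
  by lia.
have s1 : (-1) ^+ (n.*2.+1) = -1 :> F by rewrite -signr_odd /= odd_double.
have s2 : (-1) ^+ (n.*2.+2) = 1 :> F by rewrite -signr_odd /= odd_double.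
rewrite s1 s2 mul1r addrC mulN1r mulNr.

have -> : Tn n.+1 (fun x y => A (bump n.*2.+2 x) (bump n.*2.+2 y)) = Tn n.+1 A.
  apply: Tn_ext => x y; rewrite doubleS => hx hy.
  by rewrite !bump_lt.
congr (_ - _).
set B := fun x y => A (bump n.*2.+1 x) (bump n.*2.+1 y).
have skB : forall x y, B x y = - B y x by move=> x y; rewrite /B skA.
rewrite (Tn_rec skB); congr (_ * _); rewrite doubleS; congr (_ * _).
rewrite -(big_mkord xpredT (fun v => (-1) ^+ v * B v (n.*2.+1) *
   Tn n (fun x y => B (bump v x) (bump v y)))).
rewrite big_nat_recr //= big_nat_cond big1 ?add0r; last first.
  move=> i /andP[/andP[_ hi] _]; rewrite /B (@bump_lt n.*2.+1 i); last by lia.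
  rewrite (bump_ge (leqnn _)).
  rewrite band ?mulr0 ?mul0r //.
  by rewrite addn3 ltnS ltnS.
have s0 : (-1) ^+ (n.*2) = 1 :> F by rewrite -signr_odd odd_double.
rewrite s0 mul1r /B (bump_lt (ltnSn _)) (bump_ge (leqnn _)); congr (_ * _).
apply: Tn_ext => x y hx hy.
by rewrite !bump_lt // ?(ltn_trans hx) // ?(ltn_trans hy) // bump_lt.
Qed.

End Penta.

End PfPart.
Import PfPart.


Section Ana.
Variable R : realType.
Variable mu : {measure set (R * R)%type -> \bar R}.

Definition uu (a b : nat) (p : R * R) : R[i] := zc p ^+ a * (zc p)^* ^+ b.

Lemma cj (a b : R) : (Complex a b)^* = Complex a (- b).
Proof. by []. Qed.
Lemma Re_cj (w : R[i]) : complex.Re w^* = complex.Re w.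
Proof. by case: w. Qed.
Lemma Im_cj (w : R[i]) : complex.Im w^* = - complex.Im w.
Proof. by case: w. Qed.

Lemma uu_conj a b p : (uu a b p)^* = uu b a p.
Proof. by rewrite /uu rmorphM !rmorphXn /= conjCK mulrC. Qed.

Lemma mhat_sym j k : mhat mu j k = mhat mu k j.
Proof.
rewrite /mhat /moment /cintegral /=; congr fine; apply: eq_integral => p _.
by rewrite -/(uu j k p) -/(uu k j p) -uu_conj Re_cj.
Qed.

Lemma meas_step (W : R * R -> R[i]) :
  measurable_fun setT (fun p => complex.Re (W p)) ->
  measurable_fun setT (fun p => complex.Im (W p)) ->
  (measurable_fun setT (fun p => complex.Re (zc p * W p)) /\
   measurable_fun setT (fun p => complex.Im (zc p * W p))) /\
  (measurable_fun setT (fun p : R * R => complex.Re ((zc p)^* * W p)) /\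
   measurable_fun setT (fun p : R * R => complex.Im ((zc p)^* * W p))).
Proof.
move=> mR mI.
have m1 : measurable_fun [set: R * R] (fun p : R * R => p.1) by exact: measurable_fst.
have m2 : measurable_fun [set: R * R] (fun p : R * R => p.2) by exact: measurable_snd.
split; split.
- have -> : (fun p => complex.Re (zc p * W p)) =
     (fun p => p.1 * complex.Re (W p) - p.2 * complex.Im (W p)).
    by apply/funext => p; rewrite /zc; case: (W p).
  by apply: measurable_realfun.measurable_funB; apply: measurable_realfun.measurable_funM.
- have -> : (fun p => complex.Im (zc p * W p)) =
     (fun p => p.1 * complex.Im (W p) + p.2 * complex.Re (W p)).
    by apply/funext => p; rewrite /zc; case: (W p).
  by apply: measurable_realfun.measurable_funD; apply: measurable_realfun.measurable_funM.
- have -> : (fun p : R * R => complex.Re ((zc p)^* * W p)) =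
     (fun p => p.1 * complex.Re (W p) + p.2 * complex.Im (W p)).
    by apply/funext => p; rewrite /zc; case: (W p) => a b /=; rewrite mulNr opprK.
  by apply: measurable_realfun.measurable_funD; apply: measurable_realfun.measurable_funM.
- have -> : (fun p : R * R => complex.Im ((zc p)^* * W p)) =
     (fun p => p.1 * complex.Im (W p) - p.2 * complex.Re (W p)).
    by apply/funext => p; rewrite /zc; case: (W p) => a b /=; rewrite mulNr.
  by apply: measurable_realfun.measurable_funB; apply: measurable_realfun.measurable_funM.
Qed.

Lemma meas_uu a b :
  measurable_fun setT (fun p => complex.Re (uu a b p)) /\
  measurable_fun setT (fun p => complex.Im (uu a b p)).
Proof.
have E0 : forall b p, uu 0 b p = (zc p)^* ^+ b by move=> b' p; rewrite /uu expr0 mul1r.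
have ES : forall a b p, uu a.+1 b p = zc p * uu a b p by move=> a' b' p; rewrite /uu exprS mulrA.
elim: a => [|a [IH1 IH2]].
  have -> : (fun p => complex.Re (uu 0 b p)) = (fun p : R * R => complex.Re ((zc p)^* ^+ b)).
    by apply/funext => p; rewrite E0.
  have -> : (fun p => complex.Im (uu 0 b p)) = (fun p : R * R => complex.Im ((zc p)^* ^+ b)).
    by apply/funext => p; rewrite E0.
  elim: b => [|b [IH1 IH2]].
    split.
      have -> : (fun p : R * R => complex.Re ((zc p)^* ^+ 0)) = cst (1 : R) by apply/funext => p.
      exact: measurable_cst.
    have -> : (fun p : R * R => complex.Im ((zc p)^* ^+ 0)) = cst (0 : R) by apply/funext => p.
    exact: measurable_cst.
  have [_ [H1 H2]] := @meas_step (fun p => (zc p)^* ^+ b) IH1 IH2.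
  have -> : (fun p : R * R => complex.Re ((zc p)^* ^+ b.+1)) = (fun p : R * R => complex.Re ((zc p)^* * (zc p)^* ^+ b)).
    by apply/funext => p; rewrite exprS.
  have -> : (fun p : R * R => complex.Im ((zc p)^* ^+ b.+1)) = (fun p : R * R => complex.Im ((zc p)^* * (zc p)^* ^+ b)).
    by apply/funext => p; rewrite exprS.
  by split.
have [[H1 H2] _] := @meas_step (uu a b) IH1 IH2.
have -> : (fun p => complex.Re (uu a.+1 b p)) = (fun p => complex.Re (zc p * uu a b p)).
  by apply/funext => p; rewrite ES.
have -> : (fun p => complex.Im (uu a.+1 b p)) = (fun p => complex.Im (zc p * uu a b p)).
  by apply/funext => p; rewrite ES.
by split.
Qed.

Lemma uu_norm a b p : complex.Re (uu a b p) ^+ 2 + complex.Im (uu a b p) ^+ 2 =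
  (p.1 ^+ 2 + p.2 ^+ 2) ^+ (a + b).
Proof.
have stepz : forall w : R[i], complex.Re (zc p * w) ^+ 2 + complex.Im (zc p * w) ^+ 2 =
   (p.1 ^+ 2 + p.2 ^+ 2) * (complex.Re w ^+ 2 + complex.Im w ^+ 2).
  by move=> [x y]; rewrite /zc /=; ring.
have stepc : forall w : R[i], complex.Re ((zc p)^* * w) ^+ 2 + complex.Im ((zc p)^* * w) ^+ 2 =
   (p.1 ^+ 2 + p.2 ^+ 2) * (complex.Re w ^+ 2 + complex.Im w ^+ 2).
  by move=> [x y]; rewrite /zc /=; ring.
elim: a => [|a IH].
  rewrite /uu expr0 mul1r add0n.
  elim: b => [|b IH]; first by rewrite expr0 /=; ring.
  by rewrite [(zc p)^* ^+ _]exprS stepc IH [in RHS]exprS.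
by rewrite /uu [zc p ^+ _.+1]exprS -mulrA stepz -/(uu a b p) IH addSn [in RHS]exprS.
Qed.

Lemma uu_bound a b p : `|complex.Re (uu a b p)| <= Num.sqrt (p.1 ^+ 2 + p.2 ^+ 2) ^+ (a + b).
Proof.
have s0 : 0 <= p.1 ^+ 2 + p.2 ^+ 2 by rewrite addr_ge0 // sqr_ge0.
rewrite -sqrtr_sqr.
apply: (le_trans (ler_wsqrtr (_ : _ <= complex.Re (uu a b p) ^+ 2 + complex.Im (uu a b p) ^+ 2))).
  by rewrite lerDl sqr_ge0.
rewrite uu_norm -{1}(sqr_sqrtr s0) -exprM mulnC exprM sqrtr_sqr ger0_norm //.
Qed.

Hypothesis Hmom : forall n : nat,
     mu.-integrable setT (fun p : R * R => ((Num.sqrt (p.1 ^+ 2 + p.2 ^+ 2)) ^+ n)%:E).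

Lemma int_uu a b : mu.-integrable setT (EFin \o (fun p => complex.Re (uu a b p))).
Proof.
eapply le_integrable; last exact: (Hmom (a + b)).
- exact: measurableT.
- by apply/measurable_realfun.measurable_EFinP; exact: (meas_uu a b).1.
move=> p _ /=; rewrite lee_fin [X in _ <= X]ger0_norm.
  exact: uu_bound.
by rewrite exprn_ge0 // sqrtr_ge0.
Qed.

Lemma Rint_sum (I : Type) (s : seq I) (f : I -> R * R -> R) :
  (forall i, mu.-integrable setT (EFin \o f i)) ->
  mu.-integrable setT (EFin \o (fun x => \sum_(i <- s) f i x)) /\
  \int[mu]_x (\sum_(i <- s) f i x) = \sum_(i <- s) \int[mu]_x f i x.
Proof.
move=> H; elim: s => [|i s [IHi IHe]].
  split.
    have -> : (EFin \o fun x => \sum_(i <- [::]) f i x) = cst 0.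
      by apply/funext => x; rewrite /= big_nil.
    exact: integrable0.
  rewrite big_nil /Rintegral.
  under eq_integral => x _ do rewrite big_nil.
  by rewrite integral0.
split.
  have -> : (EFin \o fun x => \sum_(j <- i :: s) f j x) =
     (EFin \o f i) \+ (EFin \o fun x => \sum_(j <- s) f j x).
    by apply/funext => x; rewrite /= big_cons.
  by apply: integrableD.
under eq_Rintegral => x _ do rewrite big_cons.
by rewrite RintegralD // IHe big_cons.
Qed.

Lemma Rint_sumE (I : Type) (s : seq I) (f : I -> R * R -> R) :
  (forall i, mu.-integrable setT (EFin \o f i)) ->
  \int[mu]_x (\sum_(i <- s) f i x) = \sum_(i <- s) \int[mu]_x f i x.
Proof. by move=> H; case: (@Rint_sum I s f H). Qed.
Lemma Rint_sumI (I : Type) (s : seq I) (f : I -> R * R -> R) :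
  (forall i, mu.-integrable setT (EFin \o f i)) ->
  mu.-integrable setT (EFin \o (fun x => \sum_(i <- s) f i x)).
Proof. by move=> H; case: (@Rint_sum I s f H). Qed.

Lemma cEq (a b c d : R) : a = c -> b = d -> Complex a b = Complex c d.
Proof. by move=> -> ->. Qed.

Lemma rCD (x y : R) : rC (x + y) = rC x + rC y.
Proof. by rewrite /rC /=; apply: cEq; ring. Qed.
Lemma rCM (x y : R) : rC (x * y) = rC x * rC y.
Proof. by rewrite /rC /=; apply: cEq; ring. Qed.
Lemma rC0 : rC (0 : R) = 0.
Proof. by []. Qed.
Lemma rC_sum (I : Type) (s : seq I) (F : I -> R) :
  rC (\sum_(i <- s) F i) = \sum_(i <- s) rC (F i).
Proof. by apply: (big_morph _ rCD rC0). Qed.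
Lemma rC_conj (x : R) : (rC x)^* = rC x.
Proof. by rewrite /rC cj; apply: cEq; ring. Qed.

Definition Pc (c : nat -> R) (N : nat) : {poly R[i]} := \sum_(i < N) rC (c i) *: 'X^i.

Lemma horner_Pc c N z : (Pc c N).[z] = \sum_(i < N) rC (c i) * z ^+ i.
Proof. by rewrite horner_sum; apply: eq_bigr => i _; rewrite hornerZ hornerXn. Qed.

Lemma conj_Pc c N z : ((Pc c N).[z])^* = \sum_(i < N) rC (c i) * z^* ^+ i.
Proof.
rewrite horner_Pc rmorph_sum; apply: eq_bigr => i _.
by rewrite rmorphM rmorphXn /= rC_conj.
Qed.

Lemma uu_term p i j :
  (uu i j p - uu j i p) * (zc p - (zc p)^*) =
  rC (2 * (complex.Re (uu i.+1 j p) - complex.Re (uu i j.+1 p))).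
Proof.
have e1 : forall a b, uu a b p * zc p = uu a.+1 b p.
  by move=> a b; rewrite /uu mulrAC -exprSr.
have e2 : forall a b, uu a b p * (zc p)^* = uu a b.+1 p.
  by move=> a b; rewrite /uu -mulrA -exprSr.
rewrite mulrBl !mulrBr !e1 !e2 -[uu j.+1 i p]uu_conj -[uu j i.+1 p]uu_conj.
case: (uu i.+1 j p) => a b; case: (uu i j.+1 p) => c d.
by rewrite /rC /=; apply: cEq; ring.
Qed.

Lemma integrand_eq (c c' : nat -> R) N M p :
  ((Pc c N).[zc p] * ((Pc c' M).[zc p])^* - (Pc c' M).[zc p] * ((Pc c N).[zc p])^*) *
     (zc p - (zc p)^*) =
  rC (\sum_(i < N) \sum_(j < M) c i * c' j *
        (2 * (complex.Re (uu i.+1 j p) - complex.Re (uu i j.+1 p)))).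
Proof.
rewrite !conj_Pc !horner_Pc !big_distrlr /= [X in _ - X]exchange_big /=.
rewrite -sumrB big_distrl rC_sum /=; apply: eq_bigr => i _.
rewrite -sumrB big_distrl rC_sum /=; apply: eq_bigr => j _.
rewrite rCM -uu_term rCM /uu.
move: (rC (c i)) (rC (c' j)) (zc p ^+ i) (zc p ^+ j) ((zc p)^* ^+ i) ((zc p)^* ^+ j) (zc p - (zc p)^*) => A B X Y U V W.
ring.
Qed.
Lemma int_scale k (f : R * R -> R) : mu.-integrable setT (EFin \o f) ->
  mu.-integrable setT (EFin \o (fun p => k * f p)).
Proof.
move=> H.
have -> : (EFin \o fun p => k * f p) = (fun p => k%:E * (EFin \o f) p)%E by [].
exact: integrableZl.
Qed.

Lemma int_diff a b a' b' :
  mu.-integrable setT (EFin \o (fun p => complex.Re (uu a b p) - complex.Re (uu a' b' p))).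
Proof.
have -> : (EFin \o fun p => complex.Re (uu a b p) - complex.Re (uu a' b' p)) =
  ((EFin \o (fun p => complex.Re (uu a b p))) \- (EFin \o (fun p => complex.Re (uu a' b' p))))%E by [].
by apply: integrableB => //; exact: int_uu.
Qed.

Lemma mhatE a b : mhat mu a b = \int[mu]_p complex.Re (uu a b p).
Proof. by []. Qed.

Lemma skew_Pc (c c' : nat -> R) N M :
  skew_prod mu (Pc c N) (Pc c' M) =
  rC (\sum_(i < N) \sum_(j < M) c i * c' j * gcoef mu i j).
Proof.
rewrite /skew_prod.
under eq_fun do rewrite integrand_eq.
rewrite /cintegral /rC /=.
congr Complex; last first.
  by rewrite integral0.
rewrite -/(Rintegral _ _ _).
rewrite Rint_sumE; last first.
  move=> i; apply: Rint_sumI => j.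
  by apply: int_scale; apply: int_scale; apply: int_diff.
apply: eq_bigr => i _.
rewrite Rint_sumE; last first.
  by move=> j; apply: int_scale; apply: int_scale; apply: int_diff.
apply: eq_bigr => j _.
rewrite RintegralZl //; last by apply: int_scale; apply: int_diff.
rewrite RintegralZl //; last exact: int_diff.
by rewrite RintegralB //; exact: int_uu.
Qed.

End Ana.


Section Main.
Variable R : realType.
Variable mu : {measure set (R * R)%type -> \bar R}.
Hypothesis Htri : forall j k : nat, ((j + 2 <= k) || (k + 2 <= j))%N -> moment mu j k = 0.

Lemma mhat0 j k : (j + 2 <= k)%N \/ (k + 2 <= j)%N -> mhat mu j k = 0.
Proof.
move=> H; rewrite /mhat Htri //.
by case: H => ->; rewrite ?orbT.
Qed.

Ltac kill_mhat :=
  repeat match goal with |- context [mhat mu ?x ?y] =>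
    rewrite (@mhat0 x y); [|lia] end.

Ltac decide_eqn :=
  repeat match goal with |- context [(?x == ?y)%N] =>
    (have -> : (x == y) = false by apply/eqP; lia) ||
    (have -> : (x == y) = true by apply/eqP; lia) end.

Let msym := @mhat_sym R mu.
Definition dd x := mhat mu x x.
Definition ee x := mhat mu x x.+1.

Lemma gskew x y : gcoef mu x y = - gcoef mu y x.
Proof.
rewrite /gcoef (msym x.+1 y) (msym x y.+1).
by rewrite -mulrN opprB.
Qed.

Lemma gband x y : (x + 3 <= y)%N -> gcoef mu x y = 0.
Proof. by move=> H; rewrite /gcoef; kill_mhat; rewrite subrr mulr0. Qed.

Lemma gdec a b : gcoef mu a b =
  (a.+2 == b)%:R * (2 * ee a.+1) + (a.+1 == b)%:R * (2 * dd b)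
  - (a == b.+1)%:R * (2 * dd a) - (a == b.+2)%:R * (2 * ee b.+1).
Proof.
rewrite /gcoef /dd /ee.
have b0 : (false : nat)%:R = 0 :> R by [].
have b1 : (true : nat)%:R = 1 :> R by [].
case: (ltngtP a b) => [lt|gt|<-].
- have [t ->] : exists t, b = (a + t.+1)%N by exists (b - a).-1; lia.
  case: t => [|[|t]]; decide_eqn; kill_mhat.
  + by rewrite addn1 ?b0 ?b1; ring.
  + by rewrite !addnS addn0 ?b0 ?b1; ring.
  + by rewrite ?b0 ?b1; ring.
- have [t ->] : exists t, a = (b + t.+1)%N by exists (a - b).-1; lia.
  case: t => [|[|t]]; decide_eqn; kill_mhat.
  + by rewrite addn1 ?b0 ?b1; ring.
  + by rewrite !addnS addn0 (msym b.+2) ?b0 ?b1; ring.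
  + by rewrite ?b0 ?b1; ring.
- by decide_eqn; rewrite (msym a.+1 a) ?b0 ?b1; ring.
Qed.

Arguments dd : simpl never.
Arguments ee : simpl never.

Lemma sum_kron N c (f : nat -> R) : (c < N)%N -> \sum_(a < N) ((a : nat) == c)%:R * f a = f c.
Proof.
move=> H; rewrite (bigD1 (Ordinal H)) //= eqxx mul1r big1 ?addr0 // => a na.
have -> : (val a == c) = false.
  by apply: contraNF na => /eqP ac; apply/eqP/val_inj.
by rewrite mul0r.
Qed.

Lemma sum_kron0 N (f : nat -> R) : \sum_(a < N) (false : nat)%:R * f a = 0.
Proof. by rewrite big1 // => a _; rewrite mul0r. Qed.

Lemma sum_kronS N c (f : nat -> R) : (c < N)%N ->
  \sum_(a < N) ((a : nat).+1 == c.+1)%:R * f a = f c.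
Proof.
move=> H; rewrite -(@sum_kron _ _ f H); apply: eq_bigr => a _; by rewrite eqSS.
Qed.
Lemma sum_kronSS N c (f : nat -> R) : (c < N)%N ->
  \sum_(a < N) ((a : nat).+2 == c.+2)%:R * f a = f c.
Proof.
move=> H; rewrite -(@sum_kron _ _ f H); apply: eq_bigr => a _; by rewrite !eqSS.
Qed.

Lemma colsum (w : nat -> R) N b : (b.+3 <= N)%N ->
  \sum_(a < N) w a * gcoef mu a b =
  2 * ((if b is b'.+2 then ee b'.+1 * w b' else 0) + (if b is b'.+1 then dd b * w b' else 0)
       - dd b.+1 * w b.+1 - ee b.+1 * w b.+2).
Proof.
move=> HN.
rewrite (eq_bigr (fun a : 'I_N => (a.+2 == b)%:R * (2 * ee a.+1 * w a) +
   (a.+1 == b)%:R * (2 * dd b * w a) - ((a : nat) == b.+1)%:R * (2 * dd a * w a) -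
   ((a : nat) == b.+2)%:R * (2 * ee b.+1 * w a))); last first.
  by move=> a _; rewrite gdec; ring.
rewrite !sumrB big_split /=.
rewrite (@sum_kron _ _ (fun a => 2 * dd a * w a)); last by lia.
rewrite (@sum_kron _ _ (fun a => 2 * ee b.+1 * w a)); last by lia.
case: b HN => [|[|b]] HN.
- rewrite (sum_kron0 _ (fun a => 2 * ee a.+1 * w a)) (sum_kron0 _ (fun a => 2 * dd 0 * w a)).
  by ring.
- rewrite (sum_kron0 _ (fun a => 2 * ee a.+1 * w a)).
  rewrite (@sum_kronS _ _ (fun a => 2 * dd 1 * w a)); last by lia.
  by ring.
- rewrite (@sum_kronSS _ _ (fun a => 2 * ee a.+1 * w a)); last by lia.
  rewrite (@sum_kronS _ _ (fun a => 2 * dd b.+2 * w a)); last by lia.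
  by ring.
Qed.

Definition cN n : R := (2 ^ n * n`!)%:R.

Lemma cN_neq0 n : cN n != 0.
Proof. by rewrite /cN pnatr_eq0 -lt0n muln_gt0 expn_gt0 fact_gt0. Qed.

Lemma cNS n : cN n.+1 = (n.+1.*2)%:R * cN n.
Proof.
rewrite /cN -natrM; congr (_ %:R).
rewrite expnS factS -mul2n; ring.
Qed.

Lemma DeltaS_Tn n : DeltaS mu n = (cN n)^-1 * Tn n (gcoef mu).
Proof.
rewrite /DeltaS /pfaffian /Tn /cN; congr (_ * _); apply: eq_bigr => s _.
by congr (_ * _); apply: eq_bigr => i _; rewrite /Gmat !mxE.
Qed.

Lemma gband' x y : (x + 3 <= y)%N -> gcoef mu x y = 0.
Proof. exact: gband. Qed.

Lemma D0 : DeltaS mu 0 = 1.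
Proof. by rewrite DeltaS_Tn Tn0 /cN /= invr1 mulr1. Qed.

Lemma D1 : DeltaS mu 1 = 2 * dd 1.
Proof.
rewrite DeltaS_Tn (Tn1 gskew) /cN /=.
rewrite /gcoef (@mhat0 0 2); last by lia.
rewrite subr0 /dd.
have -> : ((2 ^ 1 * 1`!)%:R : R) = 2 by [].
have two : (2 : R) != 0 by rewrite pnatr_eq0.
by rewrite mulrA mulVf ?mul1r.
Qed.

Lemma Drec n : DeltaS mu n.+2 =
  gcoef mu (n.*2.+2) (n.*2.+3) * DeltaS mu n.+1 -
  gcoef mu (n.*2.+1) (n.*2.+3) * gcoef mu (n.*2) (n.*2.+2) * DeltaS mu n.
Proof.
rewrite !DeltaS_Tn (Tn_penta gskew gband') !cNS.
have h1 := cN_neq0 n.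
have h2 : (n.+1.*2)%:R != 0 :> R by rewrite pnatr_eq0 double_eq0.
have h3 : (n.+2.*2)%:R != 0 :> R by rewrite pnatr_eq0 double_eq0.
move: h1 h2 h3 (gcoef mu (n.*2.+2) (n.*2.+3)) (gcoef mu (n.*2.+1) (n.*2.+3)) (gcoef mu (n.*2) (n.*2.+2)).
move: (cN n) ((n.+1.*2)%:R) ((n.+2.*2)%:R) (Tn n.+1 (gcoef mu)) (Tn n (gcoef mu)) => c a b T1 T0 h1 h2 h3 g1 g2 g3.
field.
by rewrite h1 h2 h3.
Qed.

Hypothesis HDelta : forall k : nat, DeltaS mu k.+1 != 0.

Lemma Dnz k : DeltaS mu k != 0.
Proof. by case: k => [|k]; [rewrite D0 oner_neq0 | exact: HDelta]. Qed.

Lemma two_neq0 : (2 : R) != 0.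
Proof. by rewrite pnatr_eq0. Qed.

Lemma Z1 : Zc mu 1 = dd 1.
Proof.
rewrite /Zc /= D0 D1 divr1 mulrA mulVf ?mul1r //; exact: two_neq0.
Qed.

Lemma Znz j : (0 < j)%N -> Zc mu j != 0.
Proof.
move=> _; rewrite /Zc mulf_neq0 ?invr_eq0 ?two_neq0 // mulf_neq0 ?invr_eq0 //; exact: Dnz.
Qed.

Lemma I1 n : Zc mu n.+2 * Zc mu n.+1 = dd (n.*2.+3) * Zc mu n.+1 - ee (n.*2.+1) * ee (n.*2.+2).
Proof.
rewrite /Zc /= Drec /gcoef /dd /ee; kill_mhat.
have h1 := Dnz n.+1.
have h0 := Dnz n.
have h2 := two_neq0.
move: h0 h1 h2; move: (DeltaS mu n.+1) (DeltaS mu n) => P1 P0 h0 h1 h2.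
field.
by rewrite h0 h1.
Qed.

Arguments mhat : simpl never.
Arguments Zc : simpl never.
Arguments gcoef : simpl never.

Definition RecOK k (w : nat -> R) := forall j, (1 <= j <= k)%N ->
  Zc mu j * w (j.*2.-1) = - (mhat mu (j.*2.-1) (j.*2) * w (j.*2)) /\
  Zc mu j * w (j.*2 - 2)%N = mhat mu (j.*2) (j.*2.+1) * w (j.*2.+1) + mhat mu (j.*2) (j.*2) * w (j.*2).

Lemma col_zero k w : RecOK k w -> forall b, (b < k.*2)%N ->
  \sum_(a < k.*2.+2) w a * gcoef mu a b = 0.
Proof.
move=> H b hb; rewrite colsum; last by lia.
have e2 : forall x, (x.+2 - 2 = x)%N by move=> x; lia.
have [j [Hb|Hb]] : exists j, b = j.*2 \/ b = j.*2.+1.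
  by exists b./2; case Ob: (odd b); [right|left]; rewrite -[in LHS](odd_double_half b) Ob.
- subst b; case: j hb => [|j] hb.
  + have [R1 _] := H 1%N ltac:(lia).
    rewrite ?doubleS ?double0 /= in R1.
    rewrite double0 /= -Z1 /ee R1; ring.
  + have [R1a R2a] := H j.+1 ltac:(lia).
    have [R1b _] := H j.+2 ltac:(lia).
    rewrite !doubleS /= e2 in R1a R2a R1b.
    rewrite doubleS /= /dd /ee.
    have := I1 j; rewrite /dd /ee => I1j.
    have Zn := @Znz j.+1 (ltn0Sn j).
    set Z1 := Zc mu j.+1 in R1a R2a I1j Zn *.
    set Z2 := Zc mu j.+2 in R1b I1j *.
    set X := (X in 2 * X = 0).
    have key : Z1 * X = 0.
      have -> : Z1 * X =
        mhat mu j.*2.+1 j.*2.+2 * (Z1 * w j.*2 - (mhat mu j.*2.+2 j.*2.+3 * w j.*2.+3 + mhat mu j.*2.+2 j.*2.+2 * w j.*2.+2))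
        + mhat mu j.*2.+2 j.*2.+2 * (Z1 * w j.*2.+1 - - (mhat mu j.*2.+1 j.*2.+2 * w j.*2.+2))
        - Z1 * (Z2 * w j.*2.+3 - - (mhat mu j.*2.+3 j.*2.+4 * w j.*2.+4))
        + w j.*2.+3 * (Z2 * Z1 - (mhat mu j.*2.+3 j.*2.+3 * Z1 - mhat mu j.*2.+1 j.*2.+2 * mhat mu j.*2.+2 j.*2.+3)).
        by rewrite /X; ring.
      by rewrite R1a R2a R1b I1j !subrr !mulr0 !addr0 subrr.
    move/eqP: key; rewrite mulf_eq0 (negbTE Zn) /= => /eqP ->.
    by rewrite mulr0.
- subst b; case: j hb => [|j] hb.
  + have [_ R2] := H 1%N ltac:(lia).
    rewrite ?doubleS ?double0 /= in R2.
    rewrite double0 /= -Z1 /dd /ee R2; ring.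
  + have [R1a _] := H j.+1 ltac:(lia).
    have [_ R2b] := H j.+2 ltac:(lia).
    rewrite !doubleS /= e2 in R1a R2b.
    rewrite doubleS /= /dd /ee.
    have := I1 j; rewrite /dd /ee => I1j.
    have Zn := @Znz j.+1 (ltn0Sn j).
    set Z1 := Zc mu j.+1 in R1a I1j Zn *.
    set Z2 := Zc mu j.+2 in R2b I1j *.
    set X := (X in 2 * X = 0).
    have key : Z1 * X = 0.
      have -> : Z1 * X =
        mhat mu j.*2.+2 j.*2.+3 * (Z1 * w j.*2.+1 - - (mhat mu j.*2.+1 j.*2.+2 * w j.*2.+2))
        + Z1 * (Z2 * w j.*2.+2 - (mhat mu j.*2.+4 j.*2.+4.+1 * w j.*2.+4.+1 + mhat mu j.*2.+4 j.*2.+4 * w j.*2.+4))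
        - w j.*2.+2 * (Z2 * Z1 - (mhat mu j.*2.+3 j.*2.+3 * Z1 - mhat mu j.*2.+1 j.*2.+2 * mhat mu j.*2.+2 j.*2.+3)).
        by rewrite /X; ring.
      by rewrite R1a R2b I1j !subrr !mulr0 !addr0 subrr.
    move/eqP: key; rewrite mulf_eq0 (negbTE Zn) /= => /eqP ->.
    by rewrite mulr0.
Qed.

Lemma rec_zero k w : RecOK k w -> w k.*2 = 0 -> w k.*2.+1 = 0 ->
  forall t, (t <= k.*2.+1)%N -> w t = 0.
Proof.
move=> H h0 h1.
have e2 : forall x, (x.+2 - 2 = x)%N by move=> x; lia.
have claim : forall i, (i <= k)%N -> w (k - i).*2 = 0 /\ w (k - i).*2.+1 = 0.
  elim => [|i IH] hi; first by rewrite subn0.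
  have [IH0 IH1] := IH (ltnW hi).
  have ekk : (k - i = (k - i.+1).+1)%N by lia.
  rewrite ekk in IH0 IH1.
  set j := (k - i.+1)%N in IH0 IH1 *.
  have [R1 R2] := H j.+1 ltac:(lia).
  rewrite doubleS /= e2 IH0 IH1 !mulr0 oppr0 addr0 in R1 R2.
  have Zn := @Znz j.+1 (ltn0Sn j).
  split.
    by move/eqP: R2; rewrite mulf_eq0 (negbTE Zn) /= => /eqP.
  by move/eqP: R1; rewrite mulf_eq0 (negbTE Zn) /= => /eqP.
move=> t ht.
have hk : (t./2 <= k)%N.
  by have := odd_double_half t; case: (odd t) => /= ?; lia.
have [C0 C1] := claim (k - t./2)%N (leq_subr _ _).
have e : (k - (k - t./2) = t./2)%N by lia.
rewrite e in C0 C1.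
rewrite -(odd_double_half t); case: (odd t) => /=; by rewrite ?add0n ?add1n.
Qed.

Definition Col k (c : nat -> R) := forall b, (b < k.*2)%N ->
  \sum_(a < k.*2.+2) c a * gcoef mu a b = 0.

Definition Bf (c c' : nat -> R) N M :=
  \sum_(i < N) \sum_(j < M) c i * c' j * gcoef mu i j.

Lemma B_anti c c' N M : Bf c c' N M = - Bf c' c M N.
Proof.
rewrite /Bf exchange_big /= -sumrN; apply: eq_bigr => j _.
rewrite -sumrN; apply: eq_bigr => i _.
by rewrite gskew; ring.
Qed.

Lemma B_self c N : Bf c c N N = 0.
Proof. have := B_anti c c N N; set x := Bf c c N N => h; lra. Qed.

Lemma B_zero k c c' M : Col k c -> (M <= k.*2)%N -> Bf c c' k.*2.+2 M = 0.
Proof.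
move=> H hM; rewrite /Bf exchange_big /= big1 // => j _.
have -> : \sum_(i < k.*2.+2) c i * c' j * gcoef mu i j =
   c' j * \sum_(i < k.*2.+2) c i * gcoef mu i j.
  by rewrite mulr_sumr; apply: eq_bigr => i _; ring.
rewrite H ?mulr0 //.
exact: leq_trans (ltn_ord j) hM.
Qed.

Lemma B_orth k l c c' : Col k c -> Col l c' -> k != l ->
  Bf c c' k.*2.+2 l.*2.+2 = 0.
Proof.
move=> Hc Hc' nkl.
case: (ltngtP k l) => [lt|gt|eq]; last by rewrite eq eqxx in nkl.
  by rewrite B_anti (@B_zero l c' c _ Hc') ?oppr0 //; lia.
by rewrite (@B_zero k c c' _ Hc) //; lia.
Qed.

Hypothesis Hmom : forall n : nat,
     mu.-integrable setT (fun p : R * R => ((Num.sqrt (p.1 ^+ 2 + p.2 ^+ 2)) ^+ n)%:E).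
Variables alpha beta : nat -> nat -> R[i].
Hypothesis Ha_top : forall k, alpha k k.*2 = 1.
Hypothesis Ha_conv : forall k, alpha k k.*2.+1 = 0.
Hypothesis Hb_top : forall k, beta k k.*2.+1 = 1.
Hypothesis Hb_0 : forall k, beta k k.*2 = 0.
Hypothesis Ha_rec : forall k j, (1 <= j <= k)%N ->
     rC (Zc mu j) * alpha k j.*2.-1 = - rC (mhat mu j.*2.-1 j.*2) * alpha k j.*2 /\
     rC (Zc mu j) * alpha k (j.*2 - 2)%N =
       rC (mhat mu j.*2 j.*2.+1) * alpha k j.*2.+1 + rC (mhat mu j.*2 j.*2) * alpha k j.*2.
Hypothesis Hb_rec : forall k j, (1 <= j <= k)%N ->
     rC (Zc mu j) * beta k j.*2.-1 = - rC (mhat mu j.*2.-1 j.*2) * beta k j.*2 /\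
     rC (Zc mu j) * beta k (j.*2 - 2)%N =
       rC (mhat mu j.*2 j.*2.+1) * beta k j.*2.+1 + rC (mhat mu j.*2 j.*2) * beta k j.*2.

Lemma ReM_rC (x : R) (w : R[i]) : complex.Re (rC x * w) = x * complex.Re w.
Proof. by case: w => a b /=; ring. Qed.
Lemma ImM_rC (x : R) (w : R[i]) : complex.Im (rC x * w) = x * complex.Im w.
Proof. by case: w => a b /=; ring. Qed.
Lemma ReN_rC (x : R) (w : R[i]) : complex.Re (- rC x * w) = - (x * complex.Re w).
Proof. by case: w => a b /=; ring. Qed.
Lemma ImN_rC (x : R) (w : R[i]) : complex.Im (- rC x * w) = - (x * complex.Im w).
Proof. by case: w => a b /=; ring. Qed.
Lemma ReD_ (u v : R[i]) : complex.Re (u + v) = complex.Re u + complex.Re v.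
Proof. by case: u; case: v. Qed.
Lemma ImD_ (u v : R[i]) : complex.Im (u + v) = complex.Im u + complex.Im v.
Proof. by case: u; case: v. Qed.
Lemma rCN (x : R) : rC (- x) = - rC x.
Proof. by rewrite /rC; apply: (@cEq R); ring. Qed.

Lemma recOK_of (f : nat -> nat -> R[i]) (P : R[i] -> R)
  (PM : forall x w, P (rC x * w) = x * P w)
  (PN : forall x w, P (- rC x * w) = - (x * P w))
  (PD : forall u v, P (u + v) = P u + P v) k :
  (forall j, (1 <= j <= k)%N ->
     rC (Zc mu j) * f k j.*2.-1 = - rC (mhat mu j.*2.-1 j.*2) * f k j.*2 /\
     rC (Zc mu j) * f k (j.*2 - 2)%N =
       rC (mhat mu j.*2 j.*2.+1) * f k j.*2.+1 + rC (mhat mu j.*2 j.*2) * f k j.*2) ->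
  RecOK k (fun t => P (f k t)).
Proof.
move=> H j hj; have [h1 h2] := H j hj; split.
  by have := congr1 P h1; rewrite PM PN.
by have := congr1 P h2; rewrite PM PD !PM.
Qed.

Lemma real_of (w : R[i]) : complex.Im w = 0 -> w = rC (complex.Re w).
Proof. by case: w => a b /= ->. Qed.

Lemma sum_monic (f : nat -> R[i]) n : f n = 1 ->
  size (\sum_(i < n.+1) f i *: 'X^i) = n.+1 /\ \sum_(i < n.+1) f i *: 'X^i \is monic.
Proof.
move=> fn; rewrite big_ord_recr /= fn scale1r.
have -> : \sum_(i < n) f (widen_ord (leqnSn n) i) *: 'X^(widen_ord (leqnSn n) i) =
   \poly_(i < n) f i by rewrite poly_def.
have sp : (size (\poly_(i < n) f i) < size ('X^n : {poly R[i]}))%N.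
  by rewrite size_polyXn ltnS size_poly.
rewrite addrC size_polyDl // size_polyXn; split => //.
by rewrite monicE lead_coefDl // lead_coefXn.
Qed.

Lemma skewB c c' N M : skew_prod mu (@Pc R c N) (@Pc R c' M) = rC (Bf c c' N M).
Proof. exact: (@skew_Pc R mu Hmom). Qed.

Lemma main_result :
  let q (n : nat) : {poly R[i]} :=
    if odd n then \sum_(i < n.+1) beta n./2 i *: 'X^i
    else \sum_(i < n.+1) alpha n./2 i *: 'X^i in
  (forall n, size (q n) = n.+1 /\ q n \is monic) /\
  (forall k l, skew_prod mu (q k.*2) (q l.*2) = 0 /\
               skew_prod mu (q k.*2.+1) (q l.*2.+1) = 0) /\
  (exists r : nat -> R[i], forall k l,
     skew_prod mu (q k.*2) (q l.*2.+1) = r k * (k == l)%:R /\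
     skew_prod mu (q l.*2.+1) (q k.*2) = - (r k * (k == l)%:R)).
Proof.
move=> q.
pose a k t := complex.Re (alpha k t).
pose b k t := complex.Re (beta k t).
have recA : forall k, RecOK k (a k).
  by move=> k; apply: (@recOK_of alpha (@complex.Re R) ReM_rC ReN_rC ReD_ k); exact: Ha_rec.
have recB : forall k, RecOK k (b k).
  by move=> k; apply: (@recOK_of beta (@complex.Re R) ReM_rC ReN_rC ReD_ k); exact: Hb_rec.
have realA : forall k t, (t <= k.*2.+1)%N -> alpha k t = rC (a k t).
  move=> k t ht; apply: real_of.
  apply: (@rec_zero k (fun t => complex.Im (alpha k t))) => //.
  - by apply: (@recOK_of alpha (@complex.Im R) ImM_rC ImN_rC ImD_ k); exact: Ha_rec.
  - by rewrite Ha_top.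
  - by rewrite Ha_conv.
have realB : forall k t, (t <= k.*2.+1)%N -> beta k t = rC (b k t).
  move=> k t ht; apply: real_of.
  apply: (@rec_zero k (fun t => complex.Im (beta k t))) => //.
  - by apply: (@recOK_of beta (@complex.Im R) ImM_rC ImN_rC ImD_ k); exact: Hb_rec.
  - by rewrite Hb_0.
  - by rewrite Hb_top.
have colA : forall k, Col k (a k) by move=> k; exact: col_zero.
have colB : forall k, Col k (b k) by move=> k; exact: col_zero.
have qA : forall k, q k.*2 = @Pc R (a k) k.*2.+2.
  move=> k; rewrite /q odd_double doubleK /Pc [RHS]big_ord_recr /=.
  rewrite /a Ha_conv /rC /= scale0r addr0.
  by apply: eq_bigr => i _; rewrite realA // ltnW // ltn_ord.
have qB : forall k, q k.*2.+1 = @Pc R (b k) k.*2.+2.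
  move=> k; rewrite /q /= odd_double /= uphalf_double /Pc.
  by apply: eq_bigr => i _; rewrite realB // -ltnS ltn_ord.
split; [|split].
- move=> n; rewrite /q; have := odd_double_half n.
  case: (odd n) => /= Hn; apply: sum_monic.
    by rewrite -[in X in beta _ X]Hn add1n; exact: Hb_top.
  by rewrite -[in X in alpha _ X]Hn add0n; exact: Ha_top.
- move=> k l; rewrite !qA !qB !skewB.
  have [<-|nkl] := eqVneq k l; first by rewrite !B_self.
  by rewrite (@B_orth k l _ _ (colA k) (colA l) nkl) (@B_orth k l _ _ (colB k) (colB l) nkl).
- exists (fun k => rC (Bf (a k) (b k) k.*2.+2 k.*2.+2)) => k l.
  rewrite qA qB !skewB.
  have t1 : ((true : nat)%:R : R[i]) = 1 by [].
  have t0 : ((false : nat)%:R : R[i]) = 0 by [].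
  have [<-|nkl] := eqVneq k l.
    by rewrite t1 mulr1 (B_anti (b k) (a k)) rCN.
  rewrite t0 mulr0 oppr0 (@B_orth k l _ _ (colA k) (colB l) nkl).
  by rewrite (@B_orth l k _ _ (colB l) (colA k)) // eq_sym.
Qed.

End Main.

Theorem theorem4p1 (R : realType) (mu : {measure set (R * R)%type -> \bar R})
  (* finite moments: int |z|^n dmu < oo for all n *)
  (Hmom : forall n : nat,
     mu.-integrable setT (fun p : R * R => ((Num.sqrt (p.1 ^+ 2 + p.2 ^+ 2)) ^+ n)%:E))
  (* tri-diagonal moment matrix *)
  (Htri : forall j k : nat, ((j + 2 <= k) || (k + 2 <= j))%N -> moment mu j k = 0)
  (* Delta_k <> 0 for k >= 0 *)
  (HDelta : forall k : nat, DeltaS mu k.+1 != 0)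
  (* alpha k j = alpha_{2k,j},  beta k j = beta_{2k+1,j} *)
  (alpha beta : nat -> nat -> R[i])
  (Ha_top : forall k, alpha k k.*2 = 1)
  (Ha_conv : forall k, alpha k k.*2.+1 = 0)
  (Hb_top : forall k, beta k k.*2.+1 = 1)
  (Hb_0 : forall k, beta k k.*2 = 0)
  (Hb_1 : forall k, (0 < k)%N -> beta k k.*2.-1 = 0)
  (Ha_rec : forall k j, (1 <= j <= k)%N ->
     rC (Zc mu j) * alpha k j.*2.-1 = - rC (mhat mu j.*2.-1 j.*2) * alpha k j.*2 /\
     rC (Zc mu j) * alpha k (j.*2 - 2)%N =
       rC (mhat mu j.*2 j.*2.+1) * alpha k j.*2.+1 + rC (mhat mu j.*2 j.*2) * alpha k j.*2)
  (Hb_rec : forall k j, (1 <= j <= k)%N ->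
     rC (Zc mu j) * beta k j.*2.-1 = - rC (mhat mu j.*2.-1 j.*2) * beta k j.*2 /\
     rC (Zc mu j) * beta k (j.*2 - 2)%N =
       rC (mhat mu j.*2 j.*2.+1) * beta k j.*2.+1 + rC (mhat mu j.*2 j.*2) * beta k j.*2) :
  let q (n : nat) : {poly R[i]} :=
    if odd n then \sum_(i < n.+1) beta n./2 i *: 'X^i
    else \sum_(i < n.+1) alpha n./2 i *: 'X^i in
  (forall n, size (q n) = n.+1 /\ q n \is monic) /\
  (forall k l, skew_prod mu (q k.*2) (q l.*2) = 0 /\
               skew_prod mu (q k.*2.+1) (q l.*2.+1) = 0) /\
  (exists r : nat -> R[i], forall k l,
     skew_prod mu (q k.*2) (q l.*2.+1) = r k * (k == l)%:R /\
     skew_prod mu (q l.*2.+1) (q k.*2) = - (r k * (k == l)%:R)).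
Proof.
by apply: main_result.
Qed.
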